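(* Let $A$ be a rational matrix. Then $A$ is totally equimodular if and only if every matrix obtained from $A$ by a finite (possibly empty) sequence of pivots and trims is essentially $0,\pm1$.
   Context: An $m\times n$ matrix is equimodular if it has full row rank $m$ and all its nonzero $m\times m$ minors have the same absolute value. A matrix is totally equimodular if every set of linearly independent rows of it forms an equimodular matrix. A pivot of a matrix $A$ is a position $p=(i,j)$ with $A_i^j\neq 0$. The $p$-pivot $A/p$ is obtained from $A$ by dividing row $i$ by $A_i^j$ and then adding suitable multiples of this new row to the other rows so that column $j$ becomes the $i$-th unit vector. The $p$-trim $A/\!\!/p$ is obtained from $A/p$ by deleting row $i$ and column $j$. A matrix is essentially $0,\pm1$ if, in each row, all nonzero entries have the same absolute value. *)

(* Defs.v *)
From HB Require Import structures.
From mathcomp Require Import all_boot all_order all_algebra.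
Set Implicit Arguments. Unset Strict Implicit. Unset Printing Implicit Defensive.
Import Order.TTheory GRing.Theory Num.Theory.
Local Open Scope ring_scope.

(* A k x k minor is given by an injective
   choice of k columns (reordering columns only changes the sign). *)
Definition equimodular (k n : nat) (B : 'M[rat]_(k, n)) : Prop :=
  row_free B /\
  forall f g : 'I_k -> 'I_n, injective f -> injective g ->
    \det (colsub f B) != 0 -> \det (colsub g B) != 0 ->
    `|\det (colsub f B)| = `|\det (colsub g B)|.

Definition totally_equimodular (m n : nat) (A : 'M[rat]_(m, n)) : Prop :=
  forall (k : nat) (r : 'I_k -> 'I_m), injective r ->
    row_free (rowsub r A) -> equimodular (rowsub r A).

Definition pivot (m n : nat) (A : 'M[rat]_(m, n)) (i : 'I_m) (j : 'I_n)
  : 'M[rat]_(m, n) :=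
  \matrix_(r, c) if r == i then A i c / A i j
                 else A r c - A r j * (A i c / A i j).

Definition trim (m n : nat) (A : 'M[rat]_(m, n)) (i : 'I_m) (j : 'I_n)
  : 'M[rat]_(m.-1, n.-1) :=
  row' i (col' j (pivot A i j)).

Definition essentially01 (m n : nat) (A : 'M[rat]_(m, n)) : Prop :=
  forall (r : 'I_m) (c c' : 'I_n), A r c != 0 -> A r c' != 0 ->
    `|A r c| = `|A r c'|.

Inductive reach (m n : nat) (A : 'M[rat]_(m, n)) : forall p q : nat, 'M[rat]_(p, q) -> Prop :=
| reach_refl : reach A A
| reach_pivot (p q : nat) (B : 'M[rat]_(p, q)) (i : 'I_p) (j : 'I_q) :
    reach A B -> B i j != 0 -> reach A (pivot B i j)
| reach_trim (p q : nat) (B : 'M[rat]_(p, q)) (i : 'I_p) (j : 'I_q) :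
    reach A B -> B i j != 0 -> reach A (trim B i j).

(* Main.v *)
Require Import Defs.
From HB Require Import structures.
From mathcomp Require Import all_boot all_order all_algebra.
Set Implicit Arguments. Unset Strict Implicit. Unset Printing Implicit Defensive.
Import Order.TTheory GRing.Theory Num.Theory.
Local Open Scope ring_scope.

Lemma det_col0 k (M : 'M[rat]_k) t : (forall u, M u t = 0) -> \det M = 0.
Proof.
move=> H; rewrite (expand_det_col M t) big1 // => u _; by rewrite H mul0r.
Qed.

Lemma det_colunit k (M : 'M[rat]_k) s t : (forall u, M u t = (u == s)%:R) ->
  \det M = (-1) ^+ (s + t) * \det (row' s (col' t M)).
Proof.
move=> H; rewrite (expand_det_col M t) (bigD1 s) //= big1 ?addr0.
  by rewrite H eqxx mul1r.
by move=> u /negbTE us; rewrite H us mul0r.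
Qed.

Lemma sign_double (s : nat) : (-1) ^+ (s + s) = 1 :> rat.
Proof. by rewrite exprD -exprMn mulrNN mulr1 expr1n. Qed.

Lemma det_rowunit k (M : 'M[rat]_k) s c : (forall t, M s t = (t == s)%:R * c) ->
  \det M = c * \det (row' s (col' s M)).
Proof.
move=> H; rewrite (expand_det_row M s) (bigD1 s) //= big1 ?addr0.
  by rewrite H eqxx mul1r /cofactor sign_double mul1r.
by move=> u /negbTE us; rewrite H us !mul0r.
Qed.

Definition Emx m n k (A : 'M[rat]_(m,n)) (r : 'I_k -> 'I_m) (s : 'I_k) (j : 'I_n)
  : 'M[rat]_k :=
 \matrix_(u, t) if u == s then (t == s)%:R / A (r s) j
                else (u == t)%:R - (t == s)%:R * (A (r u) j / A (r s) j).

Lemma sum_delta k (s : 'I_k) (F : 'I_k -> rat) :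
  \sum_t (t == s)%:R * F t = F s.
Proof.
rewrite (bigD1 s) //= big1 ?addr0 ?eqxx ?mul1r // => t /negbTE ->; by rewrite mul0r.
Qed.

Lemma pivot_rowsub m n k (A : 'M[rat]_(m,n)) (r : 'I_k -> 'I_m) s j :
  injective r -> A (r s) j != 0 ->
  rowsub r (pivot A (r s) j) = Emx A r s j *m rowsub r A.
Proof.
move=> ri a0; apply/matrixP => u c; rewrite !mxE.
under eq_bigr do rewrite !mxE.
case: (eqVneq u s) => [->|us].
  rewrite eqxx.
  under eq_bigr do rewrite mulrAC.
  by rewrite -big_distrl /= sum_delta.
have -> : (r u == r s) = false by apply/negbTE; apply: contra us => /eqP/ri ->.
under eq_bigr do rewrite mulrBl.
rewrite sumrB.
under eq_bigr do rewrite eq_sym.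
rewrite sum_delta; under eq_bigr do rewrite -mulrA.
by rewrite sum_delta mulrAC mulrA.
Qed.

Lemma det_Emx m n k (A : 'M[rat]_(m,n)) (r : 'I_k -> 'I_m) s j :
  \det (Emx A r s j) = (A (r s) j)^-1.
Proof.
rewrite (@det_rowunit _ _ s (A (r s) j)^-1); last first.
  by move=> t; rewrite mxE eqxx.
suff -> : row' s (col' s (Emx A r s j)) = 1%:M by rewrite det1 mulr1.
have nl : forall v, (lift s v == s) = false.
  by move=> v; apply/negbTE; rewrite eq_sym neq_lift.
apply/matrixP => u t; rewrite !mxE !nl.
by rewrite mul0r subr0 (inj_eq (@lift_inj _ s)).
Qed.

Lemma pivot_minor m n k (A : 'M[rat]_(m,n)) (r : 'I_k -> 'I_m) s j (f : 'I_k -> 'I_n) :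
  injective r -> A (r s) j != 0 ->
  \det (colsub f (rowsub r (pivot A (r s) j))) = (A (r s) j)^-1 * \det (colsub f (rowsub r A)).
Proof.
by move=> ri a0; rewrite pivot_rowsub // -mulmx_colsub det_mulmx det_Emx.
Qed.

Lemma pivot_col m n k (A : 'M[rat]_(m,n)) (r : 'I_k -> 'I_m) s j u :
  injective r -> A (r s) j != 0 -> pivot A (r s) j (r u) j = (u == s)%:R.
Proof.
move=> ri a0; rewrite mxE (inj_eq ri); case: eqP => _; first by rewrite divff.
by rewrite divff // mulr1 subrr.
Qed.

Lemma minor_split m n k (A : 'M[rat]_(m,n)) (r : 'I_k.+1 -> 'I_m) s j
  (h : 'I_k.+1 -> 'I_n) t :
  injective r -> A (r s) j != 0 -> h t = j ->
  \det (colsub h (rowsub r A)) = A (r s) j * ((-1) ^+ (s + t) *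
    \det (colsub (h \o lift t) (rowsub (r \o lift s) (pivot A (r s) j)))).
Proof.
move=> ri a0 ht.
have E := pivot_minor h ri a0.
rewrite (@det_colunit _ _ s t) in E; last first.
  by move=> u; rewrite 2!mxE ht pivot_col.
suff -> : \det (colsub (h \o lift t) (rowsub (r \o lift s) (pivot A (r s) j))) =
   \det (row' s (col' t (colsub h (rowsub r (pivot A (r s) j))))).
  by rewrite E mulrA mulfV // mul1r.
by congr (\det _); apply/matrixP => u v; rewrite !mxE.
Qed.

Definition upd k n (f : 'I_k -> 'I_n) (t0 : 'I_k) (c : 'I_n) : 'I_k -> 'I_n :=
  fun t => if t == t0 then c else f t.

Lemma det_upd k n (X : 'M[rat]_(k, n)) (f : 'I_k -> 'I_n) t0 c :
  \det (colsub (upd f t0 c) X) = \sum_u X u c * cofactor (colsub f X) u t0.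
Proof.
rewrite (expand_det_col _ t0); apply: eq_big => // u _.
rewrite !mxE /upd eqxx; congr (_ * _).
rewrite /cofactor; congr (_ * \det _).
apply/matrixP => a b; rewrite !mxE.
have -> : (lift t0 b == t0) = false by apply/negbTE; rewrite eq_sym neq_lift.
by [].
Qed.

Lemma exchange k n (X : 'M[rat]_(k, n)) (f g : 'I_k -> 'I_n) t0 :
  \det (colsub f X) != 0 -> \det (colsub g X) != 0 ->
  exists t', \det (colsub (upd f t0 (g t')) X) != 0.
Proof.
move=> df dg.
case: (boolP [exists t', \det (colsub (upd f t0 (g t')) X) != 0]).
  by move=> /existsP.
rewrite negb_exists => /forallP H0.
pose w : 'rV[rat]_k := \row_u cofactor (colsub f X) u t0.
have wM : w *m colsub g X = 0.
  apply/matrixP => a t; rewrite !mxE.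
  have E : \det (colsub (upd f t0 (g t)) X) = 0.
    by apply/eqP; move: (H0 t); rewrite negbK.
  by rewrite -[RHS]E det_upd; apply: eq_big => // u _; rewrite !mxE mulrC.
have gu : colsub g X \in unitmx by rewrite unitmxE unitfE.
have w0 : w = 0 by rewrite -(mulmxK gu w) wM mul0mx.
move: df; rewrite (expand_det_col _ t0) big1 ?eqxx //.
move=> u _; have := congr1 (fun M : 'rV_k => M 0 u) w0; rewrite !mxE => ->.
by rewrite mulr0.
Qed.

Definition Hp m n (A : 'M[rat]_(m,n)) :=
  forall p q (B : 'M[rat]_(p,q)), reach A B -> essentially01 B.

Lemma reach_pivot_trans m n (A : 'M[rat]_(m,n)) i j p q (C : 'M[rat]_(p,q)) :
  A i j != 0 -> reach (pivot A i j) C -> reach A C.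
Proof.
move=> a0; elim => [|p' q' B i' j' _ IH b0|p' q' B i' j' _ IH b0].
- exact: reach_pivot (reach_refl A) a0.
- exact: reach_pivot IH b0.
- exact: reach_trim IH b0.
Qed.

Lemma Hp_pivot m n (A : 'M[rat]_(m,n)) i j : Hp A -> A i j != 0 -> Hp (pivot A i j).
Proof. by move=> HA a0 p q B rB; apply: HA; apply: reach_pivot_trans rB. Qed.

Definition Q k := forall m n (A : 'M[rat]_(m,n)), Hp A ->
  forall r : 'I_k -> 'I_m, injective r -> forall f g : 'I_k -> 'I_n,
  \det (colsub f (rowsub r A)) != 0 -> \det (colsub g (rowsub r A)) != 0 ->
  `|\det (colsub f (rowsub r A))| = `|\det (colsub g (rowsub r A))|.

Lemma nz3 (x y z : rat) : x * (y * z) != 0 -> z != 0.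
Proof. by apply: contra => /eqP->; rewrite !mulr0. Qed.

Lemma shared_col k : Q k -> forall m n (A : 'M[rat]_(m,n)), Hp A ->
  forall r : 'I_k.+1 -> 'I_m, injective r -> forall (f g : 'I_k.+1 -> 'I_n) t1 t2,
  f t1 = g t2 ->
  \det (colsub f (rowsub r A)) != 0 -> \det (colsub g (rowsub r A)) != 0 ->
  `|\det (colsub f (rowsub r A))| = `|\det (colsub g (rowsub r A))|.
Proof.
move=> Qk m n A HA r ri f g t1 t2 e df dg.
have [s a0] : exists s, A (r s) (f t1) != 0.
  case: (boolP [exists s, A (r s) (f t1) != 0]) => [/existsP//|].
  rewrite negb_exists => /forallP H0; exfalso.
  move: df; rewrite (@det_col0 _ _ t1) ?eqxx // => u; rewrite !mxE.
  by apply/eqP; move: (H0 u); rewrite negbK.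
have e' : g t2 = f t1 by [].
move: df dg.
rewrite (minor_split ri a0 (erefl (f t1))) (minor_split ri a0 e') => df dg.
rewrite !normrM !normrX normrN1 !expr1n !mul1r; congr (_ * _).
apply: Qk.
- exact: Hp_pivot.
- exact: inj_comp ri (@lift_inj _ s).
- exact: nz3 df.
- exact: nz3 dg.
Qed.

Lemma Q0 : Q 0.
Proof. by move=> m n A HA r ri f g _ _; rewrite !det_mx00. Qed.

Lemma Q1 : Q 1.
Proof.
move=> m n A HA r ri f g df dg; move: df dg; rewrite !det_mx11 !mxE => df dg.
exact: (HA _ _ A (reach_refl A)).
Qed.

Lemma Q_step k : Q k.+1 -> Q k.+2.
Proof.
move=> Qk m n A HA r ri f g df dg.
suff H : forall N (f' : 'I_k.+2 -> 'I_n),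
  (#|[pred t | ~~ [exists t', g t' == f' t]]| <= N)%N ->
  \det (colsub f' (rowsub r A)) != 0 ->
  `|\det (colsub f' (rowsub r A))| = `|\det (colsub g (rowsub r A))|.
  exact: (H _ f (leqnn _) df).
elim=> [|N IH] f' Hc df';
  case: (pickP [pred t | ~~ [exists t', g t' == f' t]]) => [t0 Ht0 | Hn].
- move: Hc; rewrite leqNgt => /negP; case.
  by apply/card_gt0P; exists t0.
- move: (Hn ord0) => /= /negbFE /existsP [t2 /eqP e].
  exact: (shared_col Qk HA ri (esym e)).
- have [t' dt'] := exchange t0 df' dg.
  set f2 := upd f' t0 (g t').
  have P2 : (#|[pred t | ~~ [exists t', g t' == f2 t]]| <= N)%N.
    rewrite -ltnS; apply: leq_trans Hc; apply: proper_card.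
    apply/properP; split.
      apply/subsetP => t; rewrite !inE /f2 /upd.
      case: eqP => // ->; case/existsP; exists t'; by [].
    exists t0; first by [].
    rewrite !inE /f2 /upd eqxx negbK; apply/existsP; exists t'; by [].
  rewrite -(IH f2 P2 dt').
  have nt : (lift t0 ord0 == t0) = false by apply/negbTE; rewrite eq_sym neq_lift.
  apply: (shared_col Qk HA ri (t1:=lift t0 ord0) (t2:=lift t0 ord0)) => //.
  by rewrite /f2 /upd nt.
- move: (Hn ord0) => /= /negbFE /existsP [t2 /eqP e].
  exact: (shared_col Qk HA ri (esym e)).
Qed.

Lemma Q_all k : Q k.
Proof.
suff : Q k /\ Q k.+1 by case.
elim: k => [|k [_ IH]]; first by split; [exact: Q0 | exact: Q1].
by split => //; apply: Q_step.
Qed.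

Lemma rank_colsub m n n' (X : 'M[rat]_(m, n)) (g : 'I_n' -> 'I_n) :
  (\rank (colsub g X) <= \rank X)%N.
Proof. by rewrite -[X in colsub g X]mulmx1 -mulmx_colsub mxrankM_maxl. Qed.

Lemma TE_ess01 m n (B : 'M[rat]_(m, n)) : totally_equimodular B -> essentially01 B.
Proof.
move=> TB x c c' nc nc'.
pose r := fun _ : 'I_1 => x.
have i1 : forall T (h : 'I_1 -> T), injective h by move=> T h a b _; rewrite !ord1.
have rf : row_free (rowsub r B).
  rewrite /row_free eqn_leq rank_leq_row lt0n mxrank_eq0.
  by apply/eqP => /matrixP /(_ 0 c); rewrite !mxE; apply/eqP.
have [_ E] := TB 1 r (i1 _ r) rf.
have := E (fun _ => c) (fun _ => c') (i1 _ _) (i1 _ _).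
by rewrite !det_mx11 !mxE; apply.
Qed.

Lemma TE_trim m n (P : 'M[rat]_(m, n)) i j :
  totally_equimodular P -> totally_equimodular (row' i (col' j P)).
Proof.
move=> TP k r ri rf.
have eqs : forall k' (g : 'I_k' -> 'I_n.-1),
  colsub g (rowsub r (row' i (col' j P))) = colsub (lift j \o g) (rowsub (lift i \o r) P).
  by move=> k' g; apply/matrixP => a b; rewrite !mxE.
have ri' : injective (lift i \o r) by apply: inj_comp ri; apply: lift_inj.
have rf' : row_free (rowsub (lift i \o r) P).
  rewrite /row_free eqn_leq rank_leq_row.
  have E2 : rowsub r (row' i (col' j P)) = colsub (lift j) (rowsub (lift i \o r) P).
    by apply/matrixP => a b; rewrite !mxE.
  have rk : \rank (colsub (lift j) (rowsub (lift i \o r) P)) = k.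
    by rewrite -E2; apply/eqP.
  by apply: leq_trans (rank_colsub _ (lift j)); rewrite rk.
have [_ E] := TP k _ ri' rf'.
split => // f g fi gi; rewrite !eqs; apply: E.
  by apply: inj_comp fi; apply: lift_inj.
by apply: inj_comp gi; apply: lift_inj.
Qed.

Lemma case1 m n k (A : 'M[rat]_(m, n)) (r : 'I_k -> 'I_m) s j :
  totally_equimodular A -> injective r -> A (r s) j != 0 ->
  row_free (rowsub r (pivot A (r s) j)) -> equimodular (rowsub r (pivot A (r s) j)).
Proof.
move=> TA ri a0 rf.
have rfA : row_free (rowsub r A).
  move: rf; rewrite pivot_rowsub // /row_free !eqn_leq !rank_leq_row /=.
  move=> H; apply: leq_trans H _; apply: mxrankM_maxr.
have [_ E] := TA k r ri rfA.
split => // f g fi gi; rewrite !pivot_minor // => df dg.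
rewrite !normrM; congr (_ * _); apply: E => //.
  by move: df; apply: contra => /eqP->; rewrite mulr0.
by move: dg; apply: contra => /eqP->; rewrite mulr0.
Qed.

Definition ext k T (x : T) (h : 'I_k -> T) : 'I_k.+1 -> T :=
  fun t => oapp h x (unlift ord0 t).

Lemma ext0 k T (x : T) (h : 'I_k -> T) : ext x h ord0 = x.
Proof. by rewrite /ext unlift_none. Qed.

Lemma extS k T (x : T) (h : 'I_k -> T) s : ext x h (lift ord0 s) = h s.
Proof. by rewrite /ext liftK. Qed.

Lemma ext_inj k (T : eqType) (x : T) (h : 'I_k -> T) :
  injective h -> (forall s, h s != x) -> injective (ext x h).
Proof.
move=> hi hx a b.
case: (unliftP ord0 a) => [a'|] ->; case: (unliftP ord0 b) => [b'|] ->;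
  rewrite ?ext0 ?extS //.
- by move=> /hi ->.
- by move=> e; move: (hx a'); rewrite e eqxx.
- by move=> e; move: (hx b'); rewrite e eqxx.
Qed.

Lemma cr_entry m n k k' (X : 'M[rat]_(m, n)) (r : 'I_k -> 'I_m) (f : 'I_k' -> 'I_n) u v :
  colsub f (rowsub r X) u v = X (r u) (f v).
Proof. by rewrite !mxE. Qed.

Lemma case2 m n k (A : 'M[rat]_(m, n)) (r : 'I_k -> 'I_m) i j :
  totally_equimodular A -> injective r -> (forall s, r s != i) -> A i j != 0 ->
  row_free (rowsub r (pivot A i j)) -> equimodular (rowsub r (pivot A i j)).
Proof.
move=> TA ri rx a0 rf.
pose r' := ext i r.
have ri' : injective r' by apply: ext_inj.
have Ei : r' ord0 = i by rewrite /r' ext0.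
have ES : forall s, r' (lift ord0 s) = r s by move=> s; rewrite /r' extS.
rewrite -Ei in a0 rf *.
set P := pivot A (r' ord0) j.
have colj : forall t, P (r' t) j = (t == ord0)%:R by move=> t; apply: pivot_col.
have nl : forall s : 'I_k, (lift ord0 s == ord0 :> 'I_k.+1) = false.
  by move=> s; apply/negbTE; rewrite eq_sym neq_lift.
have colj' : forall s, P (r s) j = 0.
  by move=> s; rewrite -ES colj nl.
have rfM : row_free (rowsub r' P).
  apply: inj_row_free => v Hv.
  have rs : forall t c, rowsub r' P t c = P (r' t) c by move=> t c; rewrite mxE.
  have v0 : v 0 ord0 = 0.
    move/matrixP: Hv => /(_ 0 j) H; rewrite [RHS]mxE in H.
    rewrite -H mxE (big_ord_recl k) /= rs colj eqxx mulr1 big1 ?addr0 // => s _.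
    have /negbTE nl' : lift ord0 s != ord0 by rewrite eq_sym neq_lift.
    by rewrite rs colj nl' mulr0.
  pose v' : 'rV[rat]_k := \row_s v 0 (lift ord0 s).
  have v'0 : v' = 0.
    apply/eqP; rewrite -(mulmx_free_eq0 _ rf); apply/eqP/matrixP => a c.
    move/matrixP: Hv => /(_ a c) H; rewrite [RHS]mxE in H.
    rewrite [a]ord1 in H *; rewrite [RHS]mxE -H [LHS]mxE [RHS]mxE (big_ord_recl k) /= v0 mul0r add0r.
    apply: eq_big => // s _; rewrite rs ES.
    have -> : v' 0 s = v 0 (lift ord0 s) by rewrite mxE.
    by rewrite [in LHS]mxE.
  apply/matrixP => a t; rewrite [a]ord1 mxE.
  case: (unliftP ord0 t) => [t'|] ->; last by [].
  by move/matrixP: v'0 => /(_ 0 t'); rewrite !mxE.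
have [_ E] := case1 TA ri' a0 rfM.
have key : forall f : 'I_k -> 'I_n,
    \det (colsub f (rowsub r P)) != 0 ->
    injective f -> injective (ext j f) /\
    \det (colsub (ext j f) (rowsub r' P)) = \det (colsub f (rowsub r P)).
  move=> f df fi; split.
    apply: ext_inj => // s; apply/eqP => fs; move: df.
    by rewrite (@det_col0 _ _ s) ?eqxx // => u; rewrite cr_entry fs colj'.
  rewrite (@det_colunit _ _ ord0 ord0); last first.
    by move=> u; rewrite cr_entry ext0 colj.
  rewrite sign_double mul1r; congr (\det _).
  by apply/matrixP => a b; rewrite !mxE extS ES.
split => // f g fi gi df dg.
have [fi' df'] := key f df fi.
have [gi' dg'] := key g dg gi.
rewrite -df' -dg'; apply: E => //.
  by rewrite df'.
by rewrite dg'.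
Qed.

Lemma TE_pivot m n (A : 'M[rat]_(m, n)) i j :
  totally_equimodular A -> A i j != 0 -> totally_equimodular (pivot A i j).
Proof.
move=> TA a0 k r ri rf.
case: (boolP [exists s, r s == i]) => [/existsP [s /eqP Es] | ].
  by subst i; exact: case1 TA ri a0 rf.
rewrite negb_exists => /forallP rx.
exact: case2 TA ri rx a0 rf.
Qed.

Lemma TE_reach m n (A : 'M[rat]_(m, n)) p q (B : 'M[rat]_(p, q)) :
  totally_equimodular A -> reach A B -> totally_equimodular B.
Proof.
move=> TA rB; elim: rB => [//|p' q' C i j _ IH c0|p' q' C i j _ IH c0].
  exact: TE_pivot.
exact: TE_trim (TE_pivot IH c0).
Qed.

Theorem mainTheorem1 (m n : nat) (A : 'M[rat]_(m, n)) :
  totally_equimodular A <->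
  (forall (p q : nat) (B : 'M[rat]_(p, q)), reach A B -> essentially01 B).
Proof.
split.
  by move=> TA p q B rB; apply: TE_ess01; apply: TE_reach rB.
move=> HA k r ri rf; split => // f g _ _.
exact: (Q_all HA ri).
Qed.
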